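(* Let $(X,\leq)$ be a poset and $K$ a field. Then (1) $FI(X,K)$ is Lie nilpotent if and only if $X$ is an antichain; (2) the group of units $\mathcal{U}(FI(X,K))$ is nilpotent if and only if either $X$ is an antichain, or $K=\mathbb{F}_2$ and $X$ is bounded.
   Context: $FI(X,K)$ is the finitary incidence algebra: the $K$-vector space of formal sums $\alpha=\sum_{x\leq y}\alpha_{xy}e_{xy}$ ($x,y\in X$, $\alpha_{xy}\in K$) such that for every pair $x<y$ only finitely many $x\leq u<v\leq y$ have $\alpha_{uv}\neq0$, with convolution product $\alpha\beta=\sum_{x\leq y}\big(\sum_{x\leq z\leq y}\alpha_{xz}\beta_{zy}\big)e_{xy}$. An associative algebra $A$ is Lie nilpotent if $\gamma_n(A)=\{0\}$ for some $n$, where $\gamma_1(A)=A$, $\gamma_{n+1}(A)=[\gamma_n(A),A]$ (span of commutators $xy-yx$). $X$ is bounded if the supremum of $|C|-1$ over finite chains $C\subseteq X$ is finite. $\mathbb{F}_2$ is the field with two elements. *)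

(* Defs.v *)
From HB Require Import structures.
From mathcomp Require Import all_boot all_order all_algebra.
From mathcomp Require Import boolp classical_sets functions cardinality fsbigop.
Set Implicit Arguments. Unset Strict Implicit. Unset Printing Implicit Defensive.
Import Order.TTheory GRing.Theory.
Local Open Scope classical_set_scope.
Local Open Scope ring_scope.

Section FI.
Variables (d : Order.disp_t) (X : porderType d) (K : fieldType).

(* Elements of K^{X x X}; FI(X,K) is carved out by the predicate is_FI. *)
Definition mat := X -> X -> K.

Definition is_FI (a : mat) : Prop :=
  (forall x y, ~~ (x <= y)%O -> a x y = 0) /\
  (forall x y, (x < y)%O ->
     finite_set [set uv : X * X |
        [&& (x <= uv.1)%O, (uv.1 < uv.2)%O & (uv.2 <= y)%O] /\ a uv.1 uv.2 != 0]).

Definition mzero : mat := fun _ _ => 0.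
Definition mone : mat := fun x y => if x == y then 1 else 0.
Definition madd (a b : mat) : mat := fun x y => a x y + b x y.
Definition mopp (a : mat) : mat := fun x y => - a x y.
Definition mscale (k : K) (a : mat) : mat := fun x y => k * a x y.

(* convolution product (alpha beta)_xy = sum_{x <= z <= y} alpha_xz beta_zy;
   on FI(X,K) the sum has finite support, which \sum_(z \in A) exploits *)
Definition conv (a b : mat) : mat := fun x y =>
  \sum_(z \in [set z : X | (x <= z)%O && (z <= y)%O]) (a x z * b z y).

Definition lie (a b : mat) : mat := madd (conv a b) (mopp (conv b a)).

Inductive kspan (P : mat -> Prop) : mat -> Prop :=
| kspan0 : kspan P mzero
| kspan_gen a : P a -> kspan P a
| kspan_add a b : kspan P a -> kspan P b -> kspan P (madd a b)
| kspan_scale k a : kspan P a -> kspan P (mscale k a).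

(* lie_gamma n = gamma_{n+1}(FI(X,K)) *)
Fixpoint lie_gamma (n : nat) : mat -> Prop :=
  match n with
  | 0 => is_FI
  | n'.+1 => kspan (fun c => exists a b,
                 [/\ lie_gamma n' a, is_FI b & c = lie a b])
  end.

Definition Lie_nilpotent : Prop :=
  exists n, forall a, lie_gamma n a -> a = mzero.

Definition is_inv (a b : mat) : Prop :=
  [/\ is_FI a, is_FI b, conv a b = mone & conv b a = mone].
Definition is_unit (a : mat) : Prop := exists b, is_inv a b.

(* subgroup of U(FI(X,K)) generated by P (P is always a set of units below) *)
Inductive gen_subgroup (P : mat -> Prop) : mat -> Prop :=
| gs_one : gen_subgroup P mone
| gs_gen a : P a -> gen_subgroup P a
| gs_mul a b : gen_subgroup P a -> gen_subgroup P b -> gen_subgroup P (conv a b)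
| gs_inv a b : gen_subgroup P a -> is_inv a b -> gen_subgroup P b.

(* grp_gamma n = gamma_{n+1}(U): gamma_1 = U, gamma_{n+1} = [gamma_n, U],
   generated by the group commutators g^-1 h^-1 g h *)
Fixpoint grp_gamma (n : nat) : mat -> Prop :=
  match n with
  | 0 => is_unit
  | n'.+1 => gen_subgroup (fun c => exists g h gi hi,
         [/\ grp_gamma n' g, is_unit h, is_inv g gi, is_inv h hi &
             c = conv gi (conv hi (conv g h))])
  end.

Definition unit_group_nilpotent : Prop :=
  exists n, forall g, grp_gamma n g -> g = mone.

End FI.

Definition antichain (d : Order.disp_t) (X : porderType d) : Prop :=
  forall x y : X, (x <= y)%O -> x = y.

(* bounded: sup of |C| - 1 over finite chains C is finite *)
Definition bounded (d : Order.disp_t) (X : porderType d) : Prop :=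
  exists N : nat, forall s : seq X, uniq s ->
    (forall x y, x \in s -> y \in s -> (x <= y)%O || (y <= x)%O) ->
    (size s <= N.+1)%N.

Definition is_F2 (K : fieldType) : Prop := forall k : K, k = 0 \/ k = 1.

(* Main.v *)
Require Import Defs.
From HB Require Import structures.
From mathcomp Require Import all_boot all_order all_algebra.
From mathcomp Require Import boolp classical_sets functions cardinality fsbigop.
Set Implicit Arguments. Unset Strict Implicit. Unset Printing Implicit Defensive.
Import Order.TTheory GRing.Theory.
Local Open Scope classical_set_scope.
Local Open Scope ring_scope.

Section Aux.
Variables (d : Order.disp_t) (X : porderType d) (K : fieldType).
Local Notation mat := (mat X K).
Local Notation is_FI := (@is_FI d X K).
Local Notation conv := (@conv d X K).
Local Notation mzero := (@mzero d X K).
Local Notation mone := (@mone d X K).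

Lemma fsum_seq (A : set X) (f : X -> K) (r : seq X) :
  uniq r -> (forall z, A z -> f z != 0 -> z \in r) ->
  \sum_(z \in A) f z = \sum_(z <- r | z \in A) f z.
Proof.
move=> ur cov.
rewrite (fsbigE [seq z <- r | z \in A]).
- by rewrite big_filter_cond; apply: eq_bigl => z; rewrite andbb.
- by rewrite filter_uniq.
- by move=> z /=; rewrite mem_filter => /andP[/set_mem].
- move=> z Az; rewrite mem_filter; apply: contraNeq => nz.
  by rewrite (mem_set Az) (cov z Az nz).
Qed.

Lemma conv_seq (a b : mat) x y r : uniq r ->
  (forall z, (x <= z)%O -> (z <= y)%O -> a x z * b z y != 0 -> z \in r) ->
  conv a b x y = \sum_(z <- r | (x <= z)%O && (z <= y)%O) a x z * b z y.
Proof.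
move=> ur cov; rewrite /conv (fsum_seq ur).
  by apply: eq_bigl => z; apply/idP/idP => [/set_mem|H] //; apply/mem_set.
by move=> z /= /andP[h1 h2]; apply: cov.
Qed.

Definition Pp (a : mat) x y := [set uv : X * X |
        [&& (x <= uv.1)%O, (uv.1 < uv.2)%O & (uv.2 <= y)%O] /\ a uv.1 uv.2 != 0].

Definition supp (a : mat) x y :=
  [set z | ((x <= z)%O && (z <= y)%O) /\ (a x z != 0 \/ a z y != 0)].

Lemma FI0 a x y : is_FI a -> ~~ (x <= y)%O -> a x y = 0.
Proof. by case=> h _; apply: h. Qed.

Lemma supp_fin a x y : is_FI a -> finite_set (supp a x y).
Proof.
move=> [h0 hf]; case: (boolP (x < y)%O) => xy.
  apply: (sub_finite_set (B := [set x] `|` [set y] `|` fst @` Pp a x y `|` snd @` Pp a x y)).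
    move=> z [/andP[xz zy] [nz|nz]].
      move: xz; rewrite le_eqVlt => /orP[/eqP <-|xz']; first by left; left; left.
      right; exists (x, z) => //; split => //; by rewrite lexx xz' zy.
    move: zy; rewrite le_eqVlt => /orP[/eqP -> |zy']; first by left; left; right.
    left; right; exists (z, y) => //; split => //; by rewrite lexx zy' xz.
  by rewrite !finite_setU; split; [split; [split|]|]; rewrite ?finite_set1 //;
     apply: finite_image; apply: hf.
apply: (sub_finite_set (B := [set x])); last by apply: finite_set1.
move=> z [/andP[xz zy] _].
have xy' : (x <= y)%O by apply: le_trans zy.
have exy : x = y by apply/eqP; move: xy; rewrite lt_neqAle xy' andbT negbK eq_sym.
by apply/le_anti; rewrite xz; rewrite exy in xz zy *; rewrite zy.
Qed.

Lemma FI_madd a b : is_FI a -> is_FI b -> is_FI (madd a b).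
Proof.
move=> [a0 af] [b0 bf]; split.
  by move=> x y h; rewrite /madd a0 // b0 // addr0.
move=> x y xy; apply: (sub_finite_set (B := Pp a x y `|` Pp b x y)).
  move=> [u v] /= [h nz]; case: (eqVneq (a u v) 0) => [au|au]; last by left.
  by right; split => //; move: nz; rewrite /madd au add0r.
by rewrite finite_setU; split; [apply: af|apply: bf].
Qed.

Lemma FI_mopp a : is_FI a -> is_FI (mopp a).
Proof.
move=> [a0 af]; split.
  by move=> x y h; rewrite /mopp a0 // oppr0.
move=> x y xy; apply: (sub_finite_set (B := Pp a x y)); last exact: af.
by move=> [u v] /= [h nz]; split => //; rewrite /mopp oppr_eq0 in nz.
Qed.

Lemma FI_mscale k a : is_FI a -> is_FI (mscale k a).
Proof.
move=> [a0 af]; split.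
  by move=> x y h; rewrite /mscale a0 // mulr0.
move=> x y xy; apply: (sub_finite_set (B := Pp a x y)); last exact: af.
move=> [u v] /= [h nz]; split => //; move: nz; rewrite /mscale mulf_eq0 negb_or.
by case/andP.
Qed.

Lemma FI_mzero : is_FI mzero.
Proof.
split => // x y xy; apply: (sub_finite_set (B := set0)); last exact: finite_set0.
by move=> [u v] /= [_]; rewrite eqxx.
Qed.

Lemma FI_mone : is_FI mone.
Proof.
split.
  move=> x y h; rewrite /mone; case: eqP => // exy.
  by move: h; rewrite exy lexx.
move=> x y xy; apply: (sub_finite_set (B := set0)); last exact: finite_set0.
move=> [u v] /= [/and3P[_ uv _]]; rewrite /mone lt_eqF //=.
by rewrite eqxx.
Qed.

Lemma FI_conv a b : is_FI a -> is_FI b -> is_FI (conv a b).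
Proof.
move=> fa fb; have [a0 af] := fa; have [b0 bf] := fb; split.
  move=> x y h; rewrite /conv; apply: fsbig1 => z /= /andP[xz zy].
  by move: h; rewrite (le_trans xz zy).
move=> x y xy.
apply: (sub_finite_set (B := Pp a x y `|` Pp b x y `|`
     [set (p.1, q.2) | p in Pp a x y & q in Pp b x y])); last first.
  rewrite finite_setU; split; first by rewrite finite_setU; split; [apply: af|apply: bf].
  by apply: finite_image2; [apply: af|apply: bf].
move=> [u v] /= [/and3P[xu uv vy] cnz].
have [z [uz zv nz]] : exists z, [/\ (u <= z)%O, (z <= v)%O & a u z * b z v != 0].
  apply: contrapT => H; move/eqP: cnz; apply; rewrite /conv.
  apply: fsbig1 => z /= /andP[uz zv]; apply: contrapT => nz; apply: H.
  by exists z; split => //; apply/eqP.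
move: nz; rewrite mulf_eq0 negb_or => /andP[na nb].
move: uz; rewrite le_eqVlt => /orP[/eqP euz|uz].
  left; right; split => //=; last by rewrite euz.
  by rewrite xu uv vy.
move: zv; rewrite le_eqVlt => /orP[/eqP ezv|zv].
  left; left; split => /=; last by rewrite -ezv.
  by rewrite xu uv vy.
right; exists (u, z); first by split => //=; rewrite xu uz (le_trans (ltW zv) vy).
exists (z, v) => //; split => //=; rewrite zv vy andbT.
by rewrite andbT; exact: le_trans xu (ltW uz).
Qed.

Definition S2 (a c : mat) x y : seq X := finmap.enum_fset (fset_set (supp a x y `|` supp c x y)).

Lemma S2_uniq a c x y : uniq (S2 a c x y).
Proof. exact: finmap.fset_uniq. Qed.

Lemma memS2l a c x y z : is_FI a -> is_FI c -> (x <= z)%O -> (z <= y)%O ->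
  a x z != 0 -> z \in S2 a c x y.
Proof.
move=> fa fc xz zy nz; rewrite /S2 in_fset_set; last first.
  by rewrite finite_setU; split; apply: supp_fin.
by apply/mem_set; left; split; [rewrite xz zy | left].
Qed.

Lemma memS2r a c x y z : is_FI a -> is_FI c -> (x <= z)%O -> (z <= y)%O ->
  c z y != 0 -> z \in S2 a c x y.
Proof.
move=> fa fc xz zy nz; rewrite /S2 in_fset_set; last first.
  by rewrite finite_setU; split; apply: supp_fin.
by apply/mem_set; right; split; [rewrite xz zy | right].
Qed.


Lemma conv_l1 a b x y q : is_FI a -> is_FI b ->
  (forall z, z != q -> a x z = 0) -> conv a b x y = a x q * b q y.
Proof.
move=> fa fb h; rewrite (@conv_seq a b x y [:: q]) //; last first.
  move=> z _ _; case: (eqVneq z q) => [->|zq]; first by rewrite mem_seq1.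
  by rewrite h // mul0r eqxx.
rewrite big_cons big_nil addr0; case: ifPn => // /nandP[] h'.
  by rewrite (FI0 fa h') mul0r.
by rewrite (FI0 fb h') mulr0.
Qed.

Lemma conv_r1 a b x y q : is_FI a -> is_FI b ->
  (forall z, z != q -> b z y = 0) -> conv a b x y = a x q * b q y.
Proof.
move=> fa fb h; rewrite (@conv_seq a b x y [:: q]) //; last first.
  move=> z _ _; case: (eqVneq z q) => [->|zq]; first by rewrite mem_seq1.
  by rewrite h // mulr0 eqxx.
rewrite big_cons big_nil addr0; case: ifPn => // /nandP[] h'.
  by rewrite (FI0 fa h') mul0r.
by rewrite (FI0 fb h') mulr0.
Qed.

Lemma conv1l b : is_FI b -> conv mone b = b.
Proof.
move=> fb; apply/funext => x; apply/funext => y.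
rewrite (@conv_l1 _ _ _ _ x) //; try exact: FI_mone; first by rewrite /mone eqxx mul1r.
by move=> z zx; rewrite /mone eq_sym (negPf zx).
Qed.

Lemma conv1r a : is_FI a -> conv a mone = a.
Proof.
move=> fa; apply/funext => x; apply/funext => y.
rewrite (@conv_r1 _ _ _ _ y) //; try exact: FI_mone; first by rewrite /mone eqxx mulr1.
by move=> z zx; rewrite /mone (negPf zx).
Qed.

Lemma convDl a b c : is_FI a -> is_FI b -> is_FI c ->
  conv (madd a b) c = madd (conv a c) (conv b c).
Proof.
move=> fa fb fc; apply/funext => x; apply/funext => y.
have cov (e : mat) z : (x <= z)%O -> (z <= y)%O -> e x z * c z y != 0 ->
    z \in S2 c c x y.
  move=> xz zy; rewrite mulf_eq0 negb_or => /andP[_ nz]; exact: memS2r.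
have ur := S2_uniq c c x y.
rewrite (conv_seq ur (cov (madd a b))) /madd (conv_seq ur (cov a)) (conv_seq ur (cov b)).
by rewrite -big_split; apply: eq_bigr => z _; rewrite mulrDl.
Qed.

Lemma convDr a b c : is_FI a -> is_FI b -> is_FI c ->
  conv a (madd b c) = madd (conv a b) (conv a c).
Proof.
move=> fa fb fc; apply/funext => x; apply/funext => y.
have cov (e : mat) z : (x <= z)%O -> (z <= y)%O -> a x z * e z y != 0 ->
    z \in S2 a a x y.
  move=> xz zy; rewrite mulf_eq0 negb_or => /andP[nz _]; exact: memS2l.
have ur := S2_uniq a a x y.
rewrite (conv_seq ur (cov (madd b c))) /madd (conv_seq ur (cov b)) (conv_seq ur (cov c)).
by rewrite -big_split; apply: eq_bigr => z _; rewrite mulrDr.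
Qed.

Lemma convA a b c : is_FI a -> is_FI b -> is_FI c ->
  conv (conv a b) c = conv a (conv b c).
Proof.
move=> fa fb fc; apply/funext => x; apply/funext => y.
pose r := S2 a c x y.
have ur : uniq r := S2_uniq a c x y.
rewrite (@conv_seq _ _ x y r) //; last first.
  move=> w xw wy; rewrite mulf_eq0 negb_or => /andP[_ nz]; exact: memS2r.
rewrite [RHS](@conv_seq _ _ x y r) //; last first.
  move=> z xz zy; rewrite mulf_eq0 negb_or => /andP[nz _]; exact: memS2l.
transitivity (\sum_(w <- r) \sum_(z <- r)
   (if [&& (x <= z)%O, (z <= w)%O & (w <= y)%O] then a x z * b z w * c w y else 0)).
  rewrite big_mkcond; apply: eq_bigr => w _; case: ifPn => [/andP[xw wy]|nw].
    rewrite (@conv_seq _ _ x w r) //; last first.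
      move=> z xz zw; rewrite mulf_eq0 negb_or => /andP[nz _]; apply: memS2l => //.
      exact: le_trans wy.
    rewrite mulr_suml big_mkcond; apply: eq_bigr => z _.
    by rewrite wy andbT; case: ifP; rewrite ?mul0r.
  rewrite big1 // => z _; case: ifP => // /and3P[xz zw wy].
  by move: nw; rewrite (le_trans xz zw) wy.
rewrite exchange_big /= [RHS]big_mkcond; apply: eq_bigr => z _.
case: ifPn => [/andP[xz zy]|nz].
  rewrite (@conv_seq _ _ z y r) //; last first.
    move=> w zw wy; rewrite mulf_eq0 negb_or => /andP[_ nz]; apply: memS2r => //.
    exact: le_trans zw.
  rewrite mulr_sumr [RHS]big_mkcond; apply: eq_bigr => w _.
  by rewrite xz /=; case: ifP; rewrite ?mulr0 // mulrA.
rewrite big1 // => w _; case: ifP => // /and3P[xz zw wy].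
by move: nz; rewrite xz (le_trans zw wy).
Qed.

End Aux.



Section Ring.
Variables (d : Order.disp_t) (X : porderType d) (K : fieldType).
Local Notation mat := (mat X K).
Local Notation is_FI := (@is_FI d X K).
Local Notation conv := (@conv d X K).
Local Notation mzero := (@mzero d X K).
Local Notation mone := (@mone d X K).

Record FIT := MkFI { fv : mat ; fP : is_FI fv }.

Lemma fv_inj : injective fv.
Proof.
move=> [a pa] [b pb] /= eab; subst; congr MkFI; exact: Prop_irrelevance.
Qed.

HB.instance Definition _ := gen_eqMixin FIT.
HB.instance Definition _ := gen_choiceMixin FIT.

Definition fi0 := MkFI (@FI_mzero d X K).
Definition fi1 := MkFI (@FI_mone d X K).
Definition fiadd (a b : FIT) := MkFI (FI_madd (fP a) (fP b)).
Definition fiopp (a : FIT) := MkFI (FI_mopp (fP a)).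
Definition fimul (a b : FIT) := MkFI (FI_conv (fP a) (fP b)).

Lemma fiaddA : associative fiadd.
Proof. by move=> a b c; apply: fv_inj; apply/funext=> x; apply/funext=> y; rewrite /= /madd addrA. Qed.
Lemma fiaddC : commutative fiadd.
Proof. by move=> a b; apply: fv_inj; apply/funext=> x; apply/funext=> y; rewrite /= /madd addrC. Qed.
Lemma fiadd0 : left_id fi0 fiadd.
Proof. by move=> a; apply: fv_inj; apply/funext=> x; apply/funext=> y; rewrite /= /madd /Defs.mzero add0r. Qed.
Lemma fiaddN : left_inverse fi0 fiopp fiadd.
Proof. by move=> a; apply: fv_inj; apply/funext=> x; apply/funext=> y; rewrite /= /madd /mopp /Defs.mzero addNr. Qed.

HB.instance Definition _ := GRing.isZmodule.Build FIT fiaddA fiaddC fiadd0 fiaddN.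

Lemma fimulA : associative fimul.
Proof. by move=> a b c; apply: fv_inj; rewrite /= convA //; apply: fP. Qed.
Lemma fimul1 : left_id fi1 fimul.
Proof. by move=> a; apply: fv_inj; rewrite /= conv1l //; apply: fP. Qed.
Lemma fimulr1 : right_id fi1 fimul.
Proof. by move=> a; apply: fv_inj; rewrite /= conv1r //; apply: fP. Qed.
Lemma fimulDl : left_distributive fimul fiadd.
Proof. by move=> a b c; apply: fv_inj; rewrite /= convDl //; apply: fP. Qed.
Lemma fimulDr : right_distributive fimul fiadd.
Proof. by move=> a b c; apply: fv_inj; rewrite /= convDr //; apply: fP. Qed.

HB.instance Definition _ := GRing.Zmodule_isPzRing.Build FIT fimulA fimul1 fimulr1 fimulDl fimulDr.

Lemma fvM (a b : FIT) : fv (a * b) = conv (fv a) (fv b). Proof. by []. Qed.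
Lemma fvD (a b : FIT) : fv (a + b) = madd (fv a) (fv b). Proof. by []. Qed.
Lemma fvN (a : FIT) : fv (- a) = mopp (fv a). Proof. by []. Qed.
Lemma fv1 : fv 1 = mone. Proof. by []. Qed.
Lemma fv0 : fv 0 = mzero. Proof. by []. Qed.

End Ring.



Section Main.
Variables (d : Order.disp_t) (X : porderType d) (K : fieldType).
Local Notation mat := (mat X K).
Local Notation is_FI := (@is_FI d X K).
Local Notation conv := (@conv d X K).
Local Notation mzero := (@mzero d X K).
Local Notation mone := (@mone d X K).
Local Notation R := (@FIT d X K).


Definition Em (c : K) (p q : X) : mat :=
  fun u v => if [&& u == p, v == q & (p <= q)%O] then c else 0.

Lemma FI_Em c p q : is_FI (Em c p q).
Proof.
split.
  move=> u v h; rewrite /Em; case: ifP => // /and3P[/eqP eu /eqP ev pq].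
  by move: h; rewrite eu ev pq.
move=> x y xy; apply: (sub_finite_set (B := [set (p, q)])); last exact: finite_set1.
move=> [u v] /= [_]; rewrite /Em; case: ifP; last by rewrite eqxx.
by case/and3P => /eqP -> /eqP ->.
Qed.

Definition diagm (f : X -> K) : mat := fun u v => if u == v then f u else 0.

Lemma FI_diag f : is_FI (diagm f).
Proof.
split.
  move=> u v h; rewrite /diagm; case: eqP => // euv.
  by move: h; rewrite euv lexx.
move=> x y xy; apply: (sub_finite_set (B := set0)); last exact: finite_set0.
move=> [u v] /= [/and3P[_ uv _]]; rewrite /diagm lt_eqF //=.
by rewrite eqxx.
Qed.

Lemma conv_diag_l f b u v : is_FI b -> conv (diagm f) b u v = f u * b u v.
Proof.
move=> fb; rewrite (@conv_l1 d X K _ _ _ _ u (FI_diag f) fb).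
  by rewrite /diagm eqxx.
by move=> z zu; rewrite /diagm eq_sym (negPf zu).
Qed.

Lemma conv_diag_r f a u v : is_FI a -> conv a (diagm f) u v = a u v * f v.
Proof.
move=> fa; rewrite (@conv_r1 d X K _ _ _ _ v fa (FI_diag f)).
  by rewrite /diagm eqxx.
by move=> z zu; rewrite /diagm (negPf zu).
Qed.

Lemma conv_Em_l c p q b u v : is_FI b -> (p <= q)%O ->
  conv (Em c p q) b u v = if u == p then c * b q v else 0.
Proof.
move=> fb pq; rewrite (@conv_l1 d X K _ _ _ _ q (FI_Em c p q) fb).
  by rewrite /Em eqxx pq andbT; case: eqP; rewrite ?mul0r.
by move=> z zq; rewrite /Em (negPf zq) andbF.
Qed.

Lemma conv_Em_r c p q a u v : is_FI a -> (p <= q)%O ->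
  conv a (Em c p q) u v = if v == q then a u p * c else 0.
Proof.
move=> fa pq; rewrite (@conv_r1 d X K _ _ _ _ p fa (FI_Em c p q)).
  by rewrite /Em eqxx pq andbT; case: eqP; rewrite ?mulr0 // andbT.
by move=> z zq; rewrite /Em (negPf zq).
Qed.


Lemma lie_E x y : (x < y)%O -> lie (Em 1 x y) (Em 1 y y) = Em 1 x y.
Proof.
move=> xy; have xy' := ltW xy.
apply/funext => u; apply/funext => v.
rewrite /lie /madd /mopp (@conv_Em_l 1 x y (Em 1 y y) u v (FI_Em _ _ _) xy') (@conv_Em_l 1 y y (Em 1 x y) u v (FI_Em _ _ _) (lexx y)).
rewrite /Em !eqxx lexx xy' /= (eq_sym y x) (lt_eqF xy) /= !andbT.
by case: (u == x); case: (v == y); case: (u == y); rewrite ?mul1r ?oppr0 ?addr0.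
Qed.

Lemma lie_gamma_E x y n : (x < y)%O -> lie_gamma n (Em 1 x y).
Proof.
move=> xy; elim: n => [|n IH] /=; first exact: FI_Em.
apply: kspan_gen; exists (Em 1 x y), (Em 1 y y); split => //; first exact: FI_Em.
by rewrite lie_E.
Qed.

Lemma lt_of_not_anti : ~ antichain X -> exists x y : X, (x < y)%O.
Proof.
move=> na; apply: contrapT => H; apply: na => x y xy.
apply: contrapT => nxy; apply: H; exists x, y.
by rewrite lt_neqAle xy andbT; apply/eqP => e; apply: nxy.
Qed.

Lemma part1a : Lie_nilpotent X K -> antichain X.
Proof.
move=> [n Hn]; apply: contrapT => /lt_of_not_anti [x [y xy]].
have := Hn _ (lie_gamma_E n xy) => /(congr1 (fun f => f x y)).
rewrite /Em /Defs.mzero !eqxx (ltW xy) /=; apply/eqP; exact: oner_neq0.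
Qed.

Lemma anti_conv_entry a b u v : antichain X -> is_FI a -> is_FI b ->
  conv a b u v = if u == v then a u u * b u u else 0.
Proof.
move=> ac fa fb; rewrite (@conv_l1 d X K _ _ _ v u fa fb); last first.
  move=> z zu; apply: (FI0 fa); apply/negP => uz.
  by move: zu; rewrite (ac _ _ uz) eqxx.
case: eqP => [-> //|nuv]; rewrite (FI0 fb) ?mulr0 //; apply/negP => uv.
exact: nuv (ac _ _ uv).
Qed.

Lemma anti_comm a b : antichain X -> is_FI a -> is_FI b -> conv a b = conv b a.
Proof.
move=> ac fa fb; apply/funext => u; apply/funext => v.
by rewrite !anti_conv_entry // mulrC.
Qed.

Lemma part1b : antichain X -> Lie_nilpotent X K.
Proof.
move=> ac; exists 1%N => a /= H.
elim: H => [//|c [a' [b' [fa fb ->]]]|a1 b1 _ -> _ ->|k a1 _ ->].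
- rewrite /lie (anti_comm ac fa fb); apply/funext => u; apply/funext => v.
  by rewrite /madd /mopp addrN.
- by apply/funext => u; apply/funext => v; rewrite /madd /Defs.mzero addr0.
- by apply/funext => u; apply/funext => v; rewrite /mscale /Defs.mzero mulr0.
Qed.

End Main.



Lemma L1 (R : pzRingType) (a b : R) : (1 + a) * (1 + b) = 1 + (a + b + a * b).
Proof. by rewrite mulrDl mulrDr !mul1r mulrDr mulr1 !addrA (addrAC 1 b a). Qed.

Lemma L2 (R : pzRingType) (a b : R) :
  (1 + a) * (1 + b) = (1 + b) * (1 + a) + (a * b - b * a).
Proof.
rewrite !L1 -!addrA; congr (_ + _); rewrite [LHS]addrCA; congr (_ + (_ + _)).
by rewrite addrC subrK.
Qed.

Lemma L3 (R : pzRingType) (a b : R) : b * a = 0 -> a * a = 0 -> b * b = 0 ->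
  (1 - a) * ((1 - b) * ((1 + a) * (1 + b))) = 1 + a * b.
Proof.
move=> ba aa bb.
have e1 : b * (1 + (a + b + a*b)) = b by rewrite !mulrDr mulr1 ba bb mulrA ba mul0r !addr0.
have e2 : a * (1 + (a + a*b)) = a by rewrite !mulrDr mulr1 aa mulrA aa mul0r !addr0.
rewrite L1 [(1 - b) * _]mulrBl mul1r e1 (addrAC a b) addrA addrK mulrBl mul1r e2.
by rewrite addrCA addrAC subrr add0r.
Qed.

Lemma L4 (R : pzRingType) (e1 e2 e3 D Di : R) : Di * D = 1 -> Di * (e2 * D) = e3 ->
  e1 * e3 = 0 -> (1 + e1) * (Di * ((1 + e2) * D)) = 1 + (e1 + e3).
Proof.
move=> h1 h2 h3.
have -> : Di * ((1 + e2) * D) = 1 + e3 by rewrite mulrDl mul1r mulrDr h1 h2.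
by rewrite L1 h3 addr0.
Qed.

Lemma Linv (R : pzRingType) (a b : R) : (1 + a) * b = 1 -> b = 1 + - (a * b).
Proof.
move=> h; have : b + a * b = 1 by rewrite -h mulrDl mul1r.
by move/(congr1 (fun t => t - a * b)); rewrite addrK.
Qed.

Section Part2.
Variables (d : Order.disp_t) (X : porderType d) (K : fieldType).
Local Notation mat := (mat X K).
Local Notation is_FI := (@is_FI d X K).
Local Notation conv := (@conv d X K).
Local Notation mzero := (@mzero d X K).
Local Notation mone := (@mone d X K).
Local Notation R := (@FIT d X K).

Lemma lift_inv g gi : is_inv g gi ->
  exists G GI : R, [/\ fv G = g, fv GI = gi, G * GI = 1 & GI * G = 1].
Proof.
move=> [fg fgi e1 e2]; exists (MkFI fg), (MkFI fgi); split => //;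
  by apply: fv_inj; rewrite fvM.
Qed.

Lemma inv_of (A B : R) : A * B = 1 -> B * A = 1 -> is_inv (fv A) (fv B).
Proof. by move=> h1 h2; split; try exact: fP; rewrite -fvM ?h1 ?h2. Qed.

Lemma part2a : antichain X -> unit_group_nilpotent X K.
Proof.
move=> ac; exists 1%N => g /= H.
elim: H => [//|c [g' [h [gi [hi [ug uh ig ih ->]]]]]|a b _ -> _ ->|a b _ -> ib].
- have [fg fgi e1 e2] := ig; have [fh fhi e3 e4] := ih.
  rewrite (anti_comm ac fg fh) -(convA fhi fh fg) e4 conv1l // e2 //.
- by apply: conv1l; exact: FI_mone.
- by have [_ fb e _] := ib; rewrite -e conv1l.
Qed.


Fixpoint ch (k : nat) (u v : X) : Prop :=
  match k with 0 => (u <= v)%O | k'.+1 => exists w, (u < w)%O /\ ch k' w v end.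

Lemma ch_le k u z v : (u <= z)%O -> ch k z v -> ch k u v.
Proof.
case: k => [|k] /= uz; first exact: le_trans.
by move=> [w [zw h]]; exists w; split => //; exact: le_lt_trans zw.
Qed.

Lemma ch_cat i j u z v : ch i u z -> ch j z v -> ch (i + j) u v.
Proof.
elim: i u => [|i IH] u /=; first by move=> uz; apply: ch_le.
by move=> [w [uw h]] h2; exists w; split => //; exact: IH h2.
Qed.

Definition J k (a : R) := forall u v, fv a u v != 0 -> ch k u v.

Lemma conv_nz (a b : mat) u v : conv a b u v != 0 ->
  exists z, [/\ (u <= z)%O, (z <= v)%O, a u z != 0 & b z v != 0].
Proof.
move=> cnz; apply: contrapT => H; move/eqP: cnz; apply; rewrite /conv.
apply: fsbig1 => z /= /andP[uz zv]; apply: contrapT => nz; apply: H.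
move/eqP: nz; rewrite mulf_eq0 negb_or => /andP[na nb].
by exists z; split.
Qed.

Lemma J_mul i j a b : J i a -> J j b -> J (i + j) (a * b).
Proof.
move=> ha hb u v; rewrite fvM => /conv_nz [z [_ _ na nb]].
exact: ch_cat (ha _ _ na) (hb _ _ nb).
Qed.

Lemma J0 a : J 0 a.
Proof.
move=> u v nz /=; case: (boolP (u <= v)%O) => // h.
by rewrite (FI0 (fP a) h) eqxx in nz.
Qed.

Lemma J_mull k a b : J k b -> J k (a * b).
Proof. by move=> hb; have := J_mul (@J0 a) hb; rewrite add0n. Qed.

Lemma J_mulr k a b : J k a -> J k (a * b).
Proof. by move=> ha; have := J_mul ha (@J0 b); rewrite addn0. Qed.

Lemma J_add k a b : J k a -> J k b -> J k (a + b).
Proof.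
move=> ha hb u v; rewrite fvD /madd.
by case: (eqVneq (fv a u v) 0) => [->|nz]; [rewrite add0r; apply: hb|move=> _; apply: ha].
Qed.

Lemma J_opp k a : J k a -> J k (- a).
Proof. by move=> ha u v; rewrite fvN /mopp oppr_eq0; apply: ha. Qed.

Lemma J_zero k : J k 0.
Proof. by move=> u v; rewrite fv0 /Defs.mzero eqxx. Qed.

Lemma ch_path k u v : ch k u v -> exists s : seq X, size s = k /\ path <%O u s.
Proof.
elim: k u => [|k IH] u /=; first by exists [::].
by move=> [w [uw /IH [s [ss ps]]]]; exists (w :: s); rewrite /= ss uw ps.
Qed.

Lemma path_comp (u : X) s : path <%O u s -> forall x y, x \in u :: s -> y \in u :: s ->
  (x <= y)%O || (y <= x)%O.
Proof.
elim: s u => [|w s IH] u.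
  by move=> _ x y; rewrite !mem_seq1 => /eqP-> /eqP->; rewrite lexx.
move=> p; have al := order_path_min lt_trans p.
have hu z : z \in w :: s -> (u < z)%O by move=> zi; apply: (allP al).
move: p => /= /andP[uw pw] x y.
rewrite in_cons => /predU1P[->|hx]; rewrite in_cons => /predU1P[->|hy].
- by rewrite lexx.
- by rewrite (ltW (hu _ hy)).
- by rewrite (ltW (hu _ hx)) orbT.
- exact: (IH w pw x y hx hy).
Qed.

Lemma bounded_ch N k u v : (forall s : seq X, uniq s ->
    (forall x y, x \in s -> y \in s -> (x <= y)%O || (y <= x)%O) ->
    (size s <= N.+1)%N) -> ch k u v -> (k <= N)%N.
Proof.
move=> hb /ch_path [s [ss ps]].
have := hb (u :: s); rewrite /= ss ltnS; apply.
  by apply: (@lt_sorted_uniq _ _ (u :: s)).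
exact: path_comp.
Qed.

Lemma J_big N a : (forall s : seq X, uniq s ->
    (forall x y, x \in s -> y \in s -> (x <= y)%O || (y <= x)%O) ->
    (size s <= N.+1)%N) -> J N.+1 a -> a = 0.
Proof.
move=> hb ha; apply: fv_inj; apply/funext => u; apply/funext => v.
rewrite fv0 /Defs.mzero; case: (eqVneq (fv a u v) 0) => // nz.
by have := bounded_ch hb (ha _ _ nz); rewrite ltnn.
Qed.

Lemma conv_diag_entry (a b : mat) u : conv a b u u = a u u * b u u.
Proof.
rewrite (@conv_seq d X K a b u u [:: u]) //; last first.
  by move=> z uz zu _; rewrite mem_seq1; apply/eqP/le_anti; rewrite zu uz.
by rewrite big_cons big_nil lexx addr0.
Qed.

Definition PP k (g : mat) := exists a : R, J k a /\ g = fv (1 + a).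

Lemma unit_P1 g : is_F2 K -> is_unit g -> PP 1 g.
Proof.
move=> f2 [gi [fg fgi e1 e2]]; exists (MkFI fg - 1); split; last first.
  by rewrite addrC subrK.
have guu u : g u u = 1.
  have := congr1 (fun f => f u u) e1; rewrite /= conv_diag_entry /Defs.mone eqxx.
  case: (f2 (g u u)) => [gz|//]; rewrite gz mul0r => /eqP.
  by rewrite eq_sym oner_eq0.
move=> u v; rewrite fvD fvN /madd /mopp /= /Defs.mone.
case: (eqVneq u v) => [<-|nuv]; first by rewrite guu subrr eqxx.
rewrite oppr0 addr0 => nz; exists v; split => //.
rewrite lt_neqAle nuv /=.
by case: (boolP (u <= v)%O) => // h; rewrite (FI0 fg h) eqxx in nz.
Qed.


Lemma PP_one k : PP k mone.
Proof. by exists 0; split; [exact: J_zero | rewrite addr0 fv1]. Qed.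

Lemma PP_mul k g1 g2 : PP k g1 -> PP k g2 -> PP k (conv g1 g2).
Proof.
move=> [a [ha ->]] [b [hb ->]]; exists (a + b + a * b); split.
  by apply: J_add; [apply: J_add|apply: J_mulr].
by rewrite -fvM L1.
Qed.

Lemma PP_inv k g b : PP k g -> is_inv g b -> PP k b.
Proof.
move=> [a [ha eg]] ib; have [G [B [eG eB GB _]]] := lift_inv ib.
have eGa : G = 1 + a by apply: fv_inj; rewrite eG.
exists (- (a * B)); split; first by apply/J_opp/J_mulr.
by rewrite -eB -(@Linv _ a B) // -eGa.
Qed.

Lemma PP_comm n g h gi hi : PP n.+1 g -> PP 1 h -> is_inv g gi -> is_inv h hi ->
  PP n.+2 (conv gi (conv hi (conv g h))).
Proof.
move=> [a [ha eg]] [b [hb eh]] ig ih.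
have [G [GI [eG eGI _ GIG]]] := lift_inv ig.
have [H [HI [eH eHI _ HIH]]] := lift_inv ih.
have eGa : G = 1 + a by apply: fv_inj; rewrite eG.
have eHb : H = 1 + b by apply: fv_inj; rewrite eH.
exists (GI * (HI * (a * b - b * a))); split.
  apply/J_mull/J_mull/J_add.
    by have := J_mul ha hb; rewrite addn1.
  by apply: J_opp; have := J_mul hb ha; rewrite add1n.
rewrite -eGI -eHI -eG -eH -!fvM; congr (fv _).
rewrite eGa eHb L2 -eHb -eGa mulrDr mulrDr [HI * (H * G)]mulrA HIH mul1r GIG.
by [].
Qed.

Lemma gamma_PP n g : is_F2 K -> grp_gamma n g -> PP n.+1 g.
Proof.
move=> f2; elim: n g => [|n IH] g /=; first exact: unit_P1.
elim => [|c [g' [h [gi [hi [gg uh ig ih ->]]]]]|a b _ Ha _ Hb|a b _ Ha ib].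
- exact: PP_one.
- exact: PP_comm (IH _ gg) (unit_P1 f2 uh) ig ih.
- exact: PP_mul.
- exact: PP_inv Ha ib.
Qed.

Lemma part2b : is_F2 K -> bounded X -> unit_group_nilpotent X K.
Proof.
move=> f2 [N hN]; exists N => g /(gamma_PP f2) [a [ha ->]].
by rewrite (J_big hN ha) addr0 fv1.
Qed.

End Part2.



Section Part3.
Variables (d : Order.disp_t) (X : porderType d) (K : fieldType).
Local Notation mat := (mat X K).
Local Notation is_FI := (@is_FI d X K).
Local Notation conv := (@conv d X K).
Local Notation mzero := (@mzero d X K).
Local Notation mone := (@mone d X K).
Local Notation R := (@FIT d X K).

Definition EmR (c : K) (p q : X) : R := MkFI (FI_Em c p q).
Definition DgR (f : X -> K) : R := MkFI (FI_diag f).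

Lemma EmR_mul a b p q r : (p <= q)%O -> (q <= r)%O ->
  EmR a p q * EmR b q r = EmR (a * b) p r.
Proof.
move=> pq qr; apply: fv_inj; apply/funext => u; apply/funext => v.
rewrite fvM /= conv_Em_l //; last exact: FI_Em.
rewrite /Em eqxx qr (le_trans pq qr) !andbT.
by case: (u == p); case: (v == r); rewrite /= ?mulr0.
Qed.

Lemma EmR_mul0 a b p q r s : (p <= q)%O -> q != r ->
  EmR a p q * EmR b r s = 0.
Proof.
move=> pq qr; apply: fv_inj; apply/funext => u; apply/funext => v.
rewrite fvM /= conv_Em_l //; last exact: FI_Em.
by rewrite /Em (negPf qr) /= mulr0; case: (u == p).
Qed.

Lemma EmR_add a b p q : EmR a p q + EmR b p q = EmR (a + b) p q.
Proof.
apply: fv_inj; apply/funext => u; apply/funext => v.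
rewrite fvD /= /madd /Em; by case: ifP; rewrite ?addr0.
Qed.

Lemma EmR0 p q : EmR 0 p q = 0.
Proof.
apply: fv_inj; apply/funext => u; apply/funext => v.
by rewrite fv0 /= /Em /Defs.mzero; case: ifP.
Qed.

Lemma EmR_sq a p q : p != q -> (p <= q)%O -> EmR a p q * EmR a p q = 0.
Proof. by move=> npq pq; apply: EmR_mul0; rewrite // eq_sym. Qed.

Lemma V_inv (e : R) : e * e = 0 -> (1 + e) * (1 - e) = 1 /\ (1 - e) * (1 + e) = 1.
Proof.
move=> ee; split; rewrite L1 ?mulrN ?mulNr ee oppr0 addr0.
  by rewrite subrr addr0.
by rewrite addNr addr0.
Qed.

Lemma unit_V (e : R) : e * e = 0 -> is_unit (fv (1 + e)).
Proof. by move=> ee; have [h1 h2] := V_inv ee; exists (fv (1 - e)); apply: inv_of. Qed.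

Lemma fv1E (e : R) u v : fv (1 + e) u v = mone u v + fv e u v.
Proof. by []. Qed.

Lemma chainG t : forall u w, path <%O u (rcons t w) ->
  grp_gamma (size t) (fv (1 + EmR 1 u w)).
Proof.
elim/last_ind: t => [|t w' IH] u w.
  move=> /= /andP[uw _]; apply: (@unit_V (EmR 1 u w)); apply: EmR_sq; rewrite ?(ltW uw) //.
  by rewrite lt_eqF.
rewrite rcons_path last_rcons => /andP[p1 lw].
have uw' : (u < w')%O.
  by apply: (allP (order_path_min lt_trans p1)); rewrite mem_rcons mem_head.
have uw := lt_trans uw' lw.
rewrite size_rcons /=; apply: gs_gen.
have aa : EmR 1 u w' * EmR 1 u w' = 0 by apply: EmR_sq; rewrite ?(ltW uw') ?lt_eqF.
have bb : EmR 1 w' w * EmR 1 w' w = 0 by apply: EmR_sq; rewrite ?(ltW lw) ?lt_eqF.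
have ba : EmR 1 w' w * EmR 1 u w' = 0.
  by apply: EmR_mul0; rewrite ?(ltW lw) // eq_sym lt_eqF.
have [a1 a2] := V_inv aa; have [b1 b2] := V_inv bb.
exists (fv (1 + EmR 1 u w')), (fv (1 + EmR 1 w' w)),
       (fv (1 - EmR 1 u w')), (fv (1 - EmR 1 w' w)); split.
- exact: IH.
- exact: unit_V.
- exact: inv_of.
- exact: inv_of.
- by rewrite -!fvM L3 // EmR_mul ?(ltW uw') ?(ltW lw) // mulr1.
Qed.


Lemma EmR_opp c p q : EmR (- c) p q = - EmR c p q.
Proof.
apply: fv_inj; apply/funext => u; apply/funext => v.
by rewrite fvN /= /mopp /Em; case: ifP; rewrite ?oppr0.
Qed.

Lemma part2c (x y : X) : (x < y)%O -> ~ is_F2 K -> ~ unit_group_nilpotent X K.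
Proof.
move=> xy nf2 [n Hn].
have [k [k0 k1]] : exists k : K, k != 0 /\ k != 1.
  apply: contrapT => H; apply: nf2 => k; case: (eqVneq k 0) => [->|k0]; first by left.
  case: (eqVneq k 1) => [->|k1]; first by right.
  by exfalso; apply: H; exists k.
pose f := fun u : X => if u == x then k else 1.
pose f' := fun u : X => if u == x then k^-1 else 1.
pose D := DgR f; pose Di := DgR f'.
have DiD : Di * D = 1.
  apply: fv_inj; apply/funext => u; apply/funext => v.
  rewrite fvM /= conv_diag_l; last exact: FI_diag.
  rewrite /diagm /f /f' /Defs.mone; case: (eqVneq u v) => [_|_]; last by rewrite mulr0.
  by case: (eqVneq u x) => _; rewrite ?mulVf ?mulr1.
have DDi : D * Di = 1.
  apply: fv_inj; apply/funext => u; apply/funext => v.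
  rewrite fvM /= conv_diag_l; last exact: FI_diag.
  rewrite /diagm /f /f' /Defs.mone; case: (eqVneq u v) => [_|_]; last by rewrite mulr0.
  by case: (eqVneq u x) => _; rewrite ?mulfV ?mulr1.
have xy' := ltW xy.
have yx : (y == x) = false by rewrite eq_sym lt_eqF.
have conj c : Di * (EmR c x y * D) = EmR (k^-1 * c) x y.
  apply: fv_inj; apply/funext => u; apply/funext => v.
  rewrite !fvM /= conv_diag_l; last by apply: FI_conv; [exact: FI_Em|exact: FI_diag].
  rewrite conv_diag_r; last exact: FI_Em.
  rewrite /Em /f /f' xy' !andbT.
  case: (eqVneq u x) => [_|_] /=; last by rewrite mul0r mulr0.
  by case: (eqVneq v y) => [e|_]; rewrite ?e ?yx ?mulr1 ?mul0r ?mulr0.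
have EE c c' : EmR c x y * EmR c' x y = 0 by apply: EmR_mul0; rewrite ?yx.
have km1 : k^-1 - 1 != 0.
  rewrite subr_eq0; apply: contra k1 => /eqP h; apply/eqP.
  by rewrite -[k]invrK h invr1.
have G m : forall c, c != 0 -> grp_gamma m (fv (1 + EmR c x y)).
  elim: m => [|m IH] c c0; first exact: (@unit_V (EmR c x y)).
  apply: gs_gen; pose c' := c / (k^-1 - 1).
  have c'0 : c' != 0 by rewrite mulf_neq0 // invr_neq0.
  have [a1 a2] := V_inv (EE c' c').
  exists (fv (1 + EmR c' x y)), (fv D), (fv (1 - EmR c' x y)), (fv Di); split.
  - exact: IH.
  - by exists (fv Di); apply: inv_of.
  - exact: inv_of.
  - exact: inv_of.
  - rewrite -!fvM (L4 (e3 := EmR (k^-1 * c') x y)) //; last by rewrite mulNr EE oppr0.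
    rewrite -EmR_opp EmR_add; congr (fv (1 + EmR _ x y)).
    apply/esym; rewrite -[- c']mulN1r -mulrDl addrC mulrC /c' divfK //.

have := Hn _ (G n 1 (oner_neq0 _)) => /(congr1 (fun f => f x y)).
rewrite fv1E /= /Defs.mone /Em (lt_eqF xy) !eqxx xy' add0r => /eqP.
by rewrite oner_eq0.
Qed.

Lemma part2d : unit_group_nilpotent X K -> bounded X.
Proof.
move=> [n Hn]; exists n => s us cs; rewrite leqNgt; apply/negP => big.
have st0 : sorted <%O (sort <=%O s).
  rewrite lt_sorted_uniq_le sort_uniq us /=.
  apply: (sort_sorted_in (P := [in s])); last exact: allss.
  by move=> a b ha hb; apply: cs.
have szt0 : size (sort <=%O s) = size s by rewrite size_sort.
move: st0 szt0; case: (sort <=%O s) => [|u t] /=; first by move=> _ e; rewrite -e in big.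
move=> pt szt.
have sz1 : (n.+1 <= size t)%N by rewrite -ltnS szt.
have pt1 : path <%O u (take n.+1 t).
  by move: pt; rewrite -[t in path _ _ t](cat_take_drop n.+1) cat_path => /andP[].
have szt1 : size (take n.+1 t) = n.+1 by rewrite size_takel.
move: pt1 szt1; case/lastP: (take n.+1 t) => [|t2 w] //.
rewrite size_rcons => pt1 [szt2].
have uw : (u < w)%O.
  by apply: (allP (order_path_min lt_trans pt1)); rewrite mem_rcons mem_head.
have g := chainG pt1; rewrite szt2 in g.
have := Hn _ g => /(congr1 (fun f => f u w)).
rewrite fv1E /= /Defs.mone /Em (lt_eqF uw) !eqxx (ltW uw) add0r => /eqP.
by rewrite oner_eq0.
Qed.

End Part3.


Theorem corollary1p9 (d : Order.disp_t) (X : porderType d) (K : fieldType) :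
  (Lie_nilpotent X K <-> antichain X) /\
  (unit_group_nilpotent X K <-> antichain X \/ (is_F2 K /\ bounded X)).
Proof.
split; first by split; [exact: part1a | exact: part1b].
split.
- move=> H; case: (pselect (antichain X)) => [a|na]; first by left.
  right; have [x [y xy]] := lt_of_not_anti na.
  split; last exact: part2d H.
  by apply: contrapT => nf; exact: part2c xy nf H.
- by case=> [a|[f b]]; [exact: part2a | exact: part2b].
Qed.
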